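(* Let $(E,\mathcal{E},\nu)$ be a $\sigma$-finite measure space, $\phi$ a Young function satisfying the $\Delta_2$-condition, $w$ a weight function, and $\Psi:E\to E$ a non-singular measurable transformation inducing the composition operator $C_\Psi f=f\circ\Psi$ on the Orlicz-Lorentz space $L_{(\phi,w)}$. If the Radon–Nikodym derivative $f_\Psi=\frac{d(\nu\circ\Psi^{-1})}{d\nu}$ is bounded away from zero on its support and $\Psi^{-1}(\mathcal{E})=\mathcal{E}$, then $\mathcal{D}(C_\Psi)=0$.
   Context: A Young function is a convex $\phi:[0,\infty)\to[0,\infty)$ with $\phi(x)=0\iff x=0$ and $\lim_{x\to\infty}\phi(x)=\infty$; $\Delta_2$-condition: $\phi(2x)\le k\phi(x)$ for some $k>0$ and all $x>0$. A weight function is a non-increasing locally integrable $w:(0,\infty)\to(0,\infty)$ with $\int_0^\infty w=\infty$. For measurable $f$, $\nu_f(s)=\nu\{|f|>s\}$, $f^*(t)=\inf\{s>0:\nu_f(s)\le t\}$; $L_{(\phi,w)}$ is the space of measurable $f:E\to\mathbb{C}$ with $\int_0^\infty\phi(\alpha f^*(t))w(t)\,dt<\infty$ for some $\alpha>0$, with the Luxemburg norm. $\Psi$ non-singular: $\nu(\Psi^{-1}(S))=0$ whenever $\nu(S)=0$. A function $h$ is bounded away from zero on its support if there is $\epsilon>0$ with $h(x)\ge\epsilon$ for almost all $x\in\{h\neq0\}$. $\Psi^{-1}(\mathcal{E})=\{\Psi^{-1}(S):S\in\mathcal{E}\}$. The descent $\mathcal{D}(T)$ is the smallest non-negative integer $m$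 with $\mathcal{R}(T^{m+1})=\mathcal{R}(T^m)$ ($\mathcal{R}$ = range, $T^0=I$), and $\infty$ if none exists. *)

(* Defs.v *)
From HB Require Import structures.
From mathcomp Require Import all_boot all_order all_algebra.
From mathcomp Require Import all_classical all_reals all_analysis.
From mathcomp Require Import measurable_realfun complex.
Set Implicit Arguments. Unset Strict Implicit. Unset Printing Implicit Defensive.
Import Order.TTheory GRing.Theory Num.Theory.
Local Open Scope classical_set_scope.
Local Open Scope ring_scope.

(* Young function phi : [0,oo) -> [0,oo) (given as a function R -> R,
   only its values on [0,oo) matter). *)
Definition young_function (R : realType) (phi : R -> R) : Prop :=
  [/\ (forall x, 0 <= x -> 0 <= phi x),
      (forall x y l, 0 <= x -> 0 <= y -> 0 <= l <= 1 ->
         phi (l * x + (1 - l) * y) <= l * phi x + (1 - l) * phi y),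
      (forall x, 0 <= x -> (phi x = 0 <-> x = 0)) &
      phi x @[x --> +oo] --> +oo].

Definition delta2 (R : realType) (phi : R -> R) : Prop :=
  exists2 k : R, 0 < k & forall x, 0 < x -> phi (2 * x) <= k * phi x.

Definition weight_function (R : realType) (w : R -> R) : Prop :=
  [/\ (forall s t, 0 < s -> s <= t -> w t <= w s),
      (forall t, 0 < t -> 0 < w t),
      (forall t, 0 < t ->
         (@lebesgue_measure R).-integrable `]0%R, t] (fun x => (w x)%:E)) &
      (\int[@lebesgue_measure R]_(x in `]0%R, +oo[) (w x)%:E = +oo)%E].

Definition cmod (R : realType) (z : R[i]) : R :=
  Num.sqrt (complex.Re z ^+ 2 + complex.Im z ^+ 2).

Definition cmeasurable d (T : measurableType d) (R : realType)
  (f : T -> R[i]) : Prop :=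
  measurable_fun setT (fun x => complex.Re (f x)) /\
  measurable_fun setT (fun x => complex.Im (f x)).

Definition distrib d (T : measurableType d) (R : realType)
  (nu : {measure set T -> \bar R}) (f : T -> R[i]) (s : R) : \bar R :=
  nu [set x | s < cmod (f x)].

Definition rearr d (T : measurableType d) (R : realType)
  (nu : {measure set T -> \bar R}) (f : T -> R[i]) (t : R) : \bar R :=
  ereal_inf [set (s%:E)%E | s in [set s : R | 0 < s /\ (distrib nu f s <= t%:E)%E]].

Definition in_OL d (T : measurableType d) (R : realType)
  (nu : {measure set T -> \bar R}) (phi w : R -> R) (f : T -> R[i]) : Prop :=
  cmeasurable f /\
  exists2 a : R, 0 < a &
    (forall t, 0 < t -> (rearr nu f t < +oo)%E) /\
    (\int[@lebesgue_measure R]_(t in `]0%R, +oo[)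
        (phi (a * fine (rearr nu f t)) * w t)%:E < +oo)%E.

(* range of (C_Psi)^m on L_(phi,w), where (C_Psi)^m f = f o Psi^m;
   elements of L_(phi,w) are identified up to nu-a.e. equality *)
Definition comp_range d (T : measurableType d) (R : realType)
  (nu : {measure set T -> \bar R}) (phi w : R -> R) (Psi : T -> T) (m : nat)
  : set (T -> R[i]) :=
  [set g | in_OL nu phi w g /\
     exists2 f, in_OL nu phi w f &
       {ae nu, forall x, f (iter m Psi x) = g x}].

Definition has_descent (X : Type) (Rg : nat -> set X) (m : nat) : Prop :=
  Rg m.+1 = Rg m /\ forall k, (k < m)%N -> Rg k.+1 <> Rg k.

(* Main.v *)
Require Import Defs.
From HB Require Import structures.
From mathcomp Require Import all_boot all_order all_algebra.
From mathcomp Require Import all_classical all_reals all_analysis.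
From mathcomp Require Import measurable_realfun complex.
Import Order.TTheory GRing.Theory Num.Theory.
Local Open Scope classical_set_scope.
Local Open Scope ring_scope.
Lemma young_mono (R : realType) (phi : R -> R) : young_function phi ->
  forall x y, 0 <= x -> x <= y -> phi x <= phi y.
Proof.
case=> ph0 conv phz _ x y x0 xy.
have phi0 : phi 0 = 0 by apply/(phz 0 (lexx 0)).
have y0 : 0 <= y by apply: le_trans xy.
have [yz|yn0] := eqVneq y 0.
  by have -> : x = y by apply/le_anti; rewrite xy yz x0.
have yp : 0 < y by rewrite lt_def yn0 y0.
pose l := x / y.
have l0 : 0 <= l by rewrite divr_ge0.
have l1 : l <= 1 by rewrite ler_pdivrMr // mul1r.
have := conv y 0 l y0 (lexx 0); rewrite l0 l1 => /(_ isT).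
rewrite mulr0 addr0 phi0 mulr0 addr0 /l mulrAC -mulrA divff ?mulr1 //.
move/le_trans; apply; rewrite -[X in _ <= X]mul1r ler_wpM2r //; exact: ph0.
Qed.

Lemma noninc_meas (R : realType) (f : R -> R) :
  (forall s t, 0 < s -> s <= t -> f t <= f s) -> measurable_fun (`]0%R, +oo[ : set R) f.
Proof.
move=> fni.
apply: (measurability (@RGenCInfty.G R)) => [|/= _ [_] [r] -> <-].
  exact: RGenCInfty.measurableE.
apply: is_interval_measurable => s t /= [+ fs] [+ ft] u /andP[su ut].
rewrite !in_itv /= !andbT => s0 t0; split; first exact: lt_le_trans su.
move: ft; rewrite in_itv /= andbT => ft.
apply: le_trans ft _; apply: fni => //; exact: lt_le_trans su.
Qed.

Section scale.
Local Open Scope ereal_scope.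
Lemma lebesgue_oc (R : realType) (x y : R) :
  (@lebesgue_measure R) `]x, y] = if (x < y)%R then (y - x)%:E else 0.
Proof.
by rewrite lebesgue_measure_itv /= lte_fin -EFinD.
Qed.

Lemma integral_scale (R : realType) (c : R) (h : R -> R) : (0 < c)%R ->
  measurable_fun (`]0%R,+oo[ : set R) h -> (forall x, (0 < x)%R -> (0 <= h x)%R) ->
  c%:E * \int[@lebesgue_measure R]_(t in `]0%R,+oo[) (h (c*t))%:E =
  \int[@lebesgue_measure R]_(u in `]0%R,+oo[) (h u)%:E.
Proof.
move=> c0 mh h0.
have mf : @measurable_fun _ _ (measurableTypeR R) (measurableTypeR R) setT (fun t : R => c * t)%R by exact: mulrl_measurable.
have mD : measurable (`]0%R,+oo[ : set R) by [].
have mhE : measurable_fun (`]0%R,+oo[ : set R) (fun u => (h u)%:E) by apply/measurable_EFinP.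
have h0' : {in `]0%R,+oo[%classic, forall y : R, 0 <= (h y)%:E}.
  by move=> y; rewrite inE /= in_itv /= andbT lee_fin => /h0.
have E := ge0_integral_pushforward mf (@lebesgue_measure R) mD mhE h0'.
have pre : (fun t : R => c * t)%R @^-1` `]0%R,+oo[%classic = `]0%R,+oo[%classic.
  apply/seteqP; split => t /=; rewrite !in_itv /= !andbT.
    by rewrite pmulr_rgt0.
  by move=> t0; rewrite mulr_gt0.
rewrite pre in E; rewrite -E.
pose k : {nonneg R} := NngNum (ltW c0).
have -> : c%:E = k%:num%:E by [].
rewrite -ge0_integral_mscale //; last by move=> y /= ; rewrite in_itv/= andbT => /h0; rewrite lee_fin.
apply: eq_measure_integral => A mA _.
apply/esym; apply: (lebesgue_measure_unique _ mA) => _ [[x y] _ <-] /=.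
rewrite /mscale /pushforward /=.
have pre2 : (fun t : R => c * t)%R @^-1` `]x, y]%classic = `](x / c)%R, (y / c)%R]%classic.
  apply/seteqP; split => t /=; rewrite !in_itv /=.
    by rewrite ltr_pdivrMr // ler_pdivlMr // ![(t * c)%R]mulrC.
  by rewrite ltr_pdivrMr // ler_pdivlMr // ![(t * c)%R]mulrC.
rewrite [X in _ = _ * X](_ : _ = lebesgue_measure `](x / c)%R, (y / c)%R]%classic); last first.
  by rewrite /pushforward pre2.
rewrite !lebesgue_oc ltr_pM2r ?invr_gt0 //.
case: ifP => _; last by rewrite mule0.
by rewrite -EFinM -mulrBl mulrCA divff ?mulr1 // gt_eqF.
Qed.
End scale.

Lemma rearr_ge0 d (T : measurableType d) (R : realType)
  (nu : {measure set T -> \bar R}) (f : T -> R[i]) t : (0 <= rearr nu f t)%E.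
Proof. by apply: le_ereal_inf_tmp => _ [s [s0 _] <-]; rewrite lee_fin ltW. Qed.

Lemma rearr_noninc d (T : measurableType d) (R : realType)
  (nu : {measure set T -> \bar R}) (f : T -> R[i]) s t :
  s <= t -> (rearr nu f t <= rearr nu f s)%E.
Proof.
move=> st; apply: ereal_inf_le_tmp => _ [u [u0 du] <-]; exists u => //; split => //.
by apply: le_trans du _; rewrite lee_fin.
Qed.

Definition noninc_on {R : realType} (P : R -> R) :=
  forall s t, 0 < s -> s <= t -> P t <= P s.

Lemma noninc_prod (R : realType) (P Q : R -> R) :
  (forall t, 0 < t -> 0 <= P t) -> (forall t, 0 < t -> 0 <= Q t) ->
  noninc_on P -> noninc_on Q -> noninc_on (fun t => P t * Q t).
Proof.
move=> P0 Q0 nP nQ s t s0 st; have t0 := lt_le_trans s0 st.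
by apply: ler_pM; [exact: P0|exact: Q0|exact: nP|exact: nQ].
Qed.

Lemma noninc_scale (R : realType) (P : R -> R) (e : R) : 0 < e ->
  noninc_on P -> noninc_on (fun t => P (e * t)).
Proof.
move=> e0 nP s t s0 st; apply: nP; first by rewrite mulr_gt0.
by rewrite ler_pM2l.
Qed.

Lemma fine_noninc (R : realType) (G : R -> \bar R) :
  (forall t, 0 <= G t)%E -> (forall t, (0 < t)%R -> G t < +oo)%E ->
  (forall s t, (s <= t)%R -> G t <= G s)%E -> noninc_on (fun t => fine (G t)).
Proof.
move=> G0 Gfin Gn s t s0 st; have t0 := lt_le_trans s0 st.
by apply: fine_le; rewrite ?inE ?ge0_fin_numE ?Gfin //; apply: Gn.
Qed.

Lemma phiG_noninc (R : realType) (phi : R -> R) (G : R -> \bar R) (a : R) :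
  young_function phi -> 0 < a ->
  (forall t, 0 <= G t)%E -> (forall t, (0 < t)%R -> G t < +oo)%E ->
  (forall s t, (s <= t)%R -> G t <= G s)%E -> noninc_on (fun t => phi (a * fine (G t))).
Proof.
move=> yphi a0 G0 Gfin Gn s t s0 st.
apply: young_mono => //; first exact: (mulr_ge0 (ltW a0) (fine_ge0 (G0 _))).
by rewrite ler_pM2l //; apply: fine_noninc.
Qed.

Lemma OL_compare (R : realType) (phi w : R -> R) (F G : R -> \bar R) (a e : R) :
  young_function phi -> weight_function w -> 0 < a -> 0 < e -> e <= 1 ->
  (forall t, 0 <= F t)%E -> (forall t, 0 <= G t)%E ->
  (forall s t, (s <= t)%R -> F t <= F s)%E ->
  (forall s t, (s <= t)%R -> G t <= G s)%E ->
  (forall t, (0 < t)%R -> G t < +oo)%E ->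
  (forall t, (0 < t)%R -> F t <= G (e * t)%R)%E ->
  (\int[@lebesgue_measure R]_(t in `]0%R, +oo[) (phi (a * fine (G t)) * w t)%:E < +oo)%E ->
  (\int[@lebesgue_measure R]_(t in `]0%R, +oo[) (phi (a * fine (F t)) * w t)%:E < +oo)%E.
Proof.
move=> yphi [wn wp _ _] a0 e0 e1 F0 G0 Fn Gn Gfin FG Gint.
have ph0 : forall x, 0 <= x -> 0 <= phi x by case: yphi.
have Ffin t : 0 < t -> (F t < +oo)%E.
  by move=> t0; apply: le_lt_trans (FG _ t0) (Gfin _ _); rewrite mulr_gt0.
have wnn : noninc_on w by move=> s t s0 st; exact: wn.
have w0 t : 0 < t -> 0 <= w t by move=> /wp /ltW.
have pG0 t : 0 <= phi (a * fine (G t)) by apply: ph0; exact: (mulr_ge0 (ltW a0) (fine_ge0 (G0 _))).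
have pF0 t : 0 <= phi (a * fine (F t)) by apply: ph0; exact: (mulr_ge0 (ltW a0) (fine_ge0 (F0 _))).
have nG := @phiG_noninc R phi G a yphi a0 G0 Gfin Gn.
have nF := @phiG_noninc R phi F a yphi a0 F0 Ffin Fn.
pose H u := phi (a * fine (G u)) * w (u / e).
have nH : noninc_on H.
  apply: noninc_prod => //; first by move=> t t0; apply: w0; rewrite divr_gt0.
  by move=> s t s0 st; apply: wn; rewrite ?divr_gt0 // ler_pM2r // invr_gt0.
have H0 t : 0 < t -> 0 <= H t.
  by move=> t0; rewrite mulr_ge0 // w0 // divr_gt0.
have mD : measurable (`]0%R,+oo[ : set R) by [].
have mE (P : R -> R) : noninc_on P ->
    measurable_fun (`]0%R,+oo[ : set R) (fun t => (P t)%:E).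
  by move=> nP; apply/measurable_EFinP; apply: noninc_meas.
have step1 : (\int[@lebesgue_measure R]_(t in `]0%R, +oo[) (phi (a * fine (F t)) * w t)%:E <=
    \int[@lebesgue_measure R]_(t in `]0%R, +oo[) (H (e * t))%:E)%E.
  apply: ge0_le_integral => //.
  - by move=> t /=; rewrite in_itv /= andbT => t0; rewrite lee_fin mulr_ge0 // w0.
  - by apply: mE; apply: noninc_prod => //; move=> t /=.
  - by apply: mE; apply: noninc_scale.
  move=> t /=; rewrite in_itv /= andbT => t0; rewrite lee_fin /H.
  rewrite [e * t]mulrC mulfK ?gt_eqF //.
  apply: ler_wpM2r; first exact: w0.
  apply: young_mono => //; first exact: (mulr_ge0 (ltW a0) (fine_ge0 (F0 _))).
  rewrite ler_pM2l // mulrC; apply: fine_le; rewrite ?inE ?ge0_fin_numE ?Ffin ?Gfin ?mulr_gt0 //.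
  exact: FG.
have step2 := @integral_scale R e H e0 (@noninc_meas R H nH) H0.
have step3 : (\int[@lebesgue_measure R]_(u in `]0%R, +oo[) (H u)%:E <=
    \int[@lebesgue_measure R]_(t in `]0%R, +oo[) (phi (a * fine (G t)) * w t)%:E)%E.
  apply: ge0_le_integral => //.
  - by move=> t /=; rewrite in_itv /= andbT => t0; rewrite lee_fin H0.
  - exact: mE.
  - by apply: mE; apply: noninc_prod.
  move=> t /=; rewrite in_itv /= andbT => t0; rewrite lee_fin /H.
  apply: ler_wpM2l => //; apply: wn => //.
  by rewrite ler_pdivlMr // ger_pMr.
apply: le_lt_trans step1 _.
have : (e%:E * \int[@lebesgue_measure R]_(t in `]0%R, +oo[) (H (e * t))%:E < +oo)%E.
  by rewrite step2; apply: le_lt_trans step3 Gint.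
case: (\int[_]_(t in _) _)%E => [r| |] //= Hlt; first exact: ltry.
by move: Hlt; rewrite gt0_muley ?lte_fin.
Qed.

Lemma factor d (T : measurableType d) (R : realType) (Psi : T -> T) (u : T -> R) :
  (forall A, measurable A -> exists S, measurable S /\ Psi @^-1` S = A) ->
  measurable_fun setT u ->
  exists h : T -> R, measurable_fun setT h /\ forall x, h (Psi x) = u x.
Proof.
move=> HE mu.
have HA : forall q : rat, exists S, measurable S /\ Psi @^-1` S = [set x | u x < ratr q].
  move=> q; apply: HE; rewrite -[X in measurable X]setTI.
  have -> : [set x | u x < ratr q] = u @^-1` `]-oo, ratr q[.
    by apply/seteqP; split => x /=; rewrite in_itv.
  exact: mu.
have [S HS] := choice HA.
pose he y : \bar R := ereal_inf [set (ratr q)%:E | q in [set q | S q y]].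
have heP x : he (Psi x) = (u x)%:E.
  apply/eqP; rewrite eq_le; apply/andP; split; last first.
    apply: le_ereal_inf_tmp => _ [q Sq <-]; rewrite lee_fin.
    have : (Psi @^-1` S q) x by [].
    by rewrite (HS q).2 /= => /ltW.
  apply/lee_addgt0Pr => e e0.
  have [q] := @rat_in_itvoo R (u x) (u x + e) ltac:(by rewrite ltrDl).
  rewrite in_itv /= => /andP[q1 q2].
  apply: le_trans (ereal_inf_lbound _) _; first by exists q => //=; rewrite -[S q]/(S q) ; have : (Psi @^-1` S q) x by rewrite (HS q).2.
  by rewrite -EFinD lee_fin ltW.
have mhe : measurable_fun setT he.
  apply: (measurability _ (ErealGenInftyO.measurableE R)) => _ /= -[_ [r ->] <-].
  have -> : setT `&` he @^-1` `]-oo, r%:E[ =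
      \bigcup_q (S q `&` [set _ | ratr q < r]).
    apply/seteqP; split => y /=.
      rewrite in_itv /= => -[_].
      rewrite /he; move=> /ereal_inf_lt[_ [q Sq <-]]; rewrite lte_fin => qr.
      by exists q.
    move=> [q _ [Sq qr]]; split => //; rewrite in_itv /=.
    apply: le_lt_trans (ereal_inf_lbound _) _; first by exists q.
    by rewrite lte_fin.
  apply: bigcupT_measurable_rat => q; apply: measurableI; first exact: (HS q).1.
  by case: (boolP (ratr q < r)) => qr; [rewrite (_ : [set _ | _] = setT) // | rewrite (_ : [set _ | _] = set0) //]; apply/seteqP; split => //= _ /negP.
exists (fun y => fine (he y)); split.
  exact: (measurableT_comp (fine_measurable measurableT) mhe).
by move=> x; rewrite heP.
Qed.

Theorem theorem4p1 (d : measure_display) (T : measurableType d) (R : realType)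
  (nu : {measure set T -> \bar R}) (phi w : R -> R) (Psi : T -> T)
  (fPsi : T -> \bar R) :
  sigma_finite setT nu ->
  young_function phi -> delta2 phi -> weight_function w ->
  measurable_fun setT Psi ->
  (forall S, measurable S -> nu S = 0%E -> nu (Psi @^-1` S) = 0%E) ->
  (* C_Psi is a well-defined operator on L_(phi,w) *)
  (forall f, in_OL nu phi w f -> in_OL nu phi w (f \o Psi)) ->
  (* fPsi is the Radon-Nikodym derivative d(nu o Psi^-1)/d nu *)
  measurable_fun [set: T] fPsi -> (forall x, (0 <= fPsi x)%E) ->
  (forall S, measurable S ->
     nu (Psi @^-1` S) = (\int[nu]_(x in S) fPsi x)%E) ->
  (* fPsi bounded away from zero on its support *)
  (exists2 eps : R, 0 < eps &
     {ae nu, forall x, fPsi x != 0%E -> (eps%:E <= fPsi x)%E}) ->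
  (* Psi^-1(E) = E *)
  [set Psi @^-1` S | S in [set S : set T | measurable S]] =
    [set A : set T | measurable A] ->
  has_descent (comp_range nu phi w Psi) 0.
Proof.
move=> sf yphi d2 wf mPsi nons COL mfPsi fPsi0 RN [eps eps0 Hae] HE.
split; last by [].
have HE' : forall A, measurable A -> exists S, measurable S /\ Psi @^-1` S = A.
  move=> A mA; have : [set A : set T | measurable A] A by [].
  by rewrite -HE => -[S mS <-]; exists S.
have mpre : forall S, measurable S -> measurable (Psi @^-1` S).
  move=> S mS; have : [set Psi @^-1` S | S in [set S : set T | measurable S]] (Psi @^-1` S).
    by exists S.
  by rewrite HE.
apply/seteqP; split => g /=.
  by move=> [Hg _]; split => //; exists g => //; exact: aeW.
move=> [Hg _]; split => //.
case: (Hg) => -[mRe mIm] [a a0 [gfin gint]].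
have [h1 [mh1 h1P]] := @factor d T R Psi _ HE' mRe.
have [h2 [mh2 h2P]] := @factor d T R Psi _ HE' mIm.
pose Z := [set y | fPsi y != 0%E].
have mZ : measurable Z by rewrite -[Z]setTI; apply: emeasurable_neq.
pose I y : R := \1_Z y.
pose f y : R[i] := Complex (h1 y * I y) (h2 y * I y).
have mI : measurable_fun setT I by apply: measurable_indic.
have gE x : (Complex (complex.Re (g x)) (complex.Im (g x))) = g x by case: (g x).
exists f; last first.
  exists (Psi @^-1` (~` Z)); split.
  - by apply: mpre; apply: measurableC.
  - rewrite RN; last by apply: measurableC.
    by apply: integral0_eq => y /= /negP; rewrite negbK => /eqP.
  move=> x /= Hne ZPx; apply: Hne.
  by rewrite /f /I indicE mem_set // !mulr1 h1P h2P gE.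
split.
  by split; [exact: measurable_funM mh1 mI | exact: measurable_funM mh2 mI].
exists a; first exact: a0.
pose e := Num.min eps 1.
have e0 : 0 < e by rewrite lt_min eps0 ltr01.
have e1 : e <= 1 by rewrite ge_min lexx orbT.
have eeps : e <= eps by rewrite ge_min lexx.
have Hdist : forall s, 0 < s -> (eps%:E * distrib nu f s <= distrib nu g s)%E.
  move=> s s0.
  pose A := [set y | s < cmod (Complex (h1 y) (h2 y))].
  have mA : measurable A.
    have mc : measurable_fun setT (fun y => cmod (Complex (h1 y) (h2 y))).
      apply: (measurableT_comp (continuous_measurable_fun (@sqrt_continuous R))).
      by apply: measurable_funD; apply: measurable_funX.
    have -> : A = setT `&` (fun y => cmod (Complex (h1 y) (h2 y))) @^-1` `]s, +oo[.
      by rewrite setTI; apply/funext => y; rewrite /preimage /A /= in_itv /= andbT.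
    exact: mc.
  have pre : Psi @^-1` A = [set x | s < cmod (g x)].
    by apply/funext => x; rewrite /preimage /A /= h1P h2P gE.
  have fA : [set y | s < cmod (f y)] = A `&` Z.
    apply/seteqP; split => y /=; rewrite /f /I indicE;
      case: (boolP (y \in Z)) => yZ /=; rewrite ?mulr1 ?mulr0.
    - by move=> H; split => //; rewrite inE in yZ.
    - by rewrite /cmod /= expr0n /= addr0 sqrtr0 => H; have := lt_trans H s0; rewrite ltxx.
    - by case.
    - by move=> [_ Zy]; exfalso; move/negP: yZ; apply; exact: mem_set.
  rewrite /distrib fA -pre RN //.
  apply: (@le_trans _ _ (\int[nu]_(x in A `&` Z) fPsi x)%E); last first.
    apply: ge0_subset_integral => //; first exact: measurableI.
    exact: measurable_funS mfPsi.
  rewrite -(integral_cst nu (measurableI _ _ mA mZ)).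
  apply: ae_ge0_le_integral.
  - exact: measurableI.
  - by move=> x _; rewrite /= lee_fin ltW.
  - exact: measurable_cst.
  - by move=> x _; exact: fPsi0.
  - exact: measurable_funS mfPsi.
  by apply: filterS Hae => x H [_ Zx]; apply: H.
have FG : forall t, 0 < t -> (rearr nu f t <= rearr nu g (e * t))%E.
  move=> t t0; apply: ereal_inf_le_tmp => _ [s [s0 ds] <-]; exists s => //; split => //.
  rewrite -(@lee_pmul2l _ eps%:E) //; apply: le_trans (Hdist s s0) _.
  by apply: le_trans ds _; rewrite -EFinM lee_fin ler_pM2r.
split.
  by move=> t t0; apply: le_lt_trans (FG t t0) _; apply: gfin; rewrite mulr_gt0.
apply: (@OL_compare R phi w (rearr nu f) (rearr nu g) a e yphi wf a0 e0 e1
  (@rearr_ge0 d T R nu f) (@rearr_ge0 d T R nu g) (@rearr_noninc d T R nu f) (@rearr_noninc d T R nu g) _ FG gint).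
by move=> t t0; exact: gfin.
Qed.
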